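(* Let $q=2^m\geq 4$ with $m$ a positive integer, let $b\in\mathbb{F}_q^*$ and $\delta\in\mathbb{F}_{q^2}\setminus\mathbb{F}_q$. Put $$B=b^4\delta^{q+1}\mathrm{Tr}_{q^2/q}(\delta),\quad C=b^4\mathrm{Tr}_{q^2/q}(\delta),\quad D=b^4\mathrm{Tr}_{q^2/q}(\delta)^2,$$ and define $S_{-1}=0$, $S_0=1$, $S_i=C^{2^{i-1}}S_{i-1}+D^{2^{i-1}}S_{i-2}$ for $i\geq1$. If the polynomial $$P(x)=b(x^q+x+\delta)^{q(2q+1)/4}+x$$ permutes $\mathbb{F}_{q^2}$, then its compositional inverse over $\mathbb{F}_{q^2}$ is $$P^{-1}(x)=x+b\left(\delta+\sum_{i=0}^{m-1}\left(S_{m-2-i}^{2^{i+1}}+D^{1-2^{i+1}}S_i\right)\left(x^{4q}+x^4+B\right)^{2^i}\right)^{q(2q+1)/4}.$$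
   Context: $\mathrm{Tr}_{q^2/q}(y)=y+y^q$. The compositional inverse of a permutation polynomial $f$ of $\mathbb{F}_{Q}$ is the unique polynomial $f^{-1}$ (modulo $x^Q-x$) with $f(f^{-1}(c))=f^{-1}(f(c))=c$ for all $c\in\mathbb{F}_Q$. *)

(* Defs.v *)
From mathcomp Require Import all_boot all_order all_algebra all_field.
Set Implicit Arguments. Unset Strict Implicit. Unset Printing Implicit Defensive.
Import GRing.Theory.
Local Open Scope ring_scope.

Section Defs.
Variable F : finFieldType.

Definition Tr (q : nat) (y : F) : F := y + y ^+ q.

(* Shifted sequence: Sh n = S_{n-1}, so Sh 0 = S_{-1} = 0, Sh 1 = S_0 = 1,
   Sh (n+2) = S_{n+1} = C^(2^n) S_n + D^(2^n) S_{n-1}. *)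
Fixpoint Sh (C D : F) (n : nat) : F :=
  match n with
  | 0 => 0
  | 1 => 1
  | (k.+1 as n1).+1 => C ^+ (2 ^ k) * Sh C D n1 + D ^+ (2 ^ k) * Sh C D k
  end.

Definition Sseq (C D : F) (i : nat) : F := Sh C D i.+1.

Definition expo (q : nat) : nat := (q * (2 * q + 1)) %/ 4.

Definition Ppoly (q : nat) (b delta : F) (x : F) : F :=
  b * (x ^+ q + x + delta) ^+ expo q + x.

Definition Bc (q : nat) (b delta : F) : F := b ^+ 4 * delta ^+ q.+1 * Tr q delta.
Definition Cc (q : nat) (b delta : F) : F := b ^+ 4 * Tr q delta.
Definition Dc (q : nat) (b delta : F) : F := b ^+ 4 * (Tr q delta) ^+ 2.

(* D^(1 - 2^(i+1)) written as D * (D^(2^(i+1)))^-1 (D is nonzero). *)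
Definition Pinv (m : nat) (b delta : F) (x : F) : F :=
  let q := (2 ^ m)%N in
  let B := Bc q b delta in
  let C := Cc q b delta in
  let D := Dc q b delta in
  x + b * (delta + \sum_(i < m)
        ((Sh C D (m.-1 - i)) ^+ (2 ^ i.+1) + D * (D ^+ (2 ^ i.+1))^-1 * Sseq C D i)
          * (x ^+ (4 * q) + x ^+ 4 + B) ^+ (2 ^ i)) ^+ expo q.

End Defs.

(* Main.v *)
Require Import Defs.
From mathcomp Require Import all_boot all_order all_algebra all_field.
From mathcomp Require Import ring zify.
Import GRing.Theory.
Local Open Scope ring_scope.


Section Char2.
Variable R : comPzRingType.
Hypothesis h2 : (2%:R : R) = 0.

Lemma c2 (a b k : R) : a - b = 2%:R * k -> a = b.
Proof. by rewrite h2 mul0r => /eqP; rewrite subr_eq0 => /eqP. Qed.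

Lemma addcc (x : R) : x + x = 0.
Proof. by rewrite -mulr2n -mulr_natr h2 mulr0. Qed.

Lemma oppc (x : R) : - x = x.
Proof. by apply/eqP; rewrite eq_sym -subr_eq0 opprK addcc. Qed.

Lemma sqrD (x y : R) : (x + y) ^+ 2 = x ^+ 2 + y ^+ 2.
Proof. by apply: (c2 _ _ (x * y)); ring. Qed.

Lemma exp2D k (x y : R) : (x + y) ^+ (2 ^ k) = x ^+ (2 ^ k) + y ^+ (2 ^ k).
Proof.
elim: k => [|k IH]; first by rewrite !expr1.
by rewrite expnSr !exprM IH sqrD.
Qed.

Lemma exp2M k l (x : R) : (x ^+ (2 ^ k)) ^+ (2 ^ l) = x ^+ (2 ^ (k + l)).
Proof. by rewrite -exprM expnD. Qed.

End Char2.

Section ShFacts.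
Variable F : finFieldType.
Hypothesis h2 : (2%:R : F) = 0.

Lemma ShSS (C D : F) k :
  Sh C D k.+2 = C ^+ (2 ^ k) * Sh C D k.+1 + D ^+ (2 ^ k) * Sh C D k.
Proof. by []. Qed.

Lemma Sh_rev (C D : F) n :
  Sh C D n.+2 = C * (Sh C D n.+1) ^+ 2 + D ^+ 2 * (Sh C D n) ^+ 4.
Proof.
suff: Sh C D n.+2 = C * (Sh C D n.+1) ^+ 2 + D ^+ 2 * (Sh C D n) ^+ 4 /\
      Sh C D n.+3 = C * (Sh C D n.+2) ^+ 2 + D ^+ 2 * (Sh C D n.+1) ^+ 4 by case.
elim: n => [|n [IH1 IH2]].
  rewrite !ShSS /= !expr1 !expr0n /=; split; ring.
split; first exact: IH2.
have e1 : Sh C D n.+3 ^+ 2 = C ^+ (2 ^ n.+2) * Sh C D n.+2 ^+ 2 + D ^+ (2 ^ n.+2) * Sh C D n.+1 ^+ 2.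
  by rewrite ShSS sqrD // !exprMn -!exprM -!expnSr.
have e2 : Sh C D n.+2 ^+ 4 = C ^+ (2 ^ n.+2) * Sh C D n.+1 ^+ 4 + D ^+ (2 ^ n.+2) * Sh C D n ^+ 4.
  rewrite ShSS (_ : 4%N = 2 ^ 2)%N // exp2D // !exprMn -!exprM -!expnD.
  by rewrite addn2.
rewrite e1 e2 ShSS IH2.
move: (Sh C D n.+2) IH1 => s2 ->; ring.
Qed.

Lemma Sh_frob (C D : F) k : C ^+ (2 ^ k) = C -> D ^+ (2 ^ k) = D ->
  forall n, Sh C D n ^+ (2 ^ k) = Sh C D n.
Proof.
move=> hC hD n.
suff: Sh C D n ^+ (2 ^ k) = Sh C D n /\ Sh C D n.+1 ^+ (2 ^ k) = Sh C D n.+1 by case.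
elim: n => [|n [IH1 IH2]]; first by rewrite /= expr0n expr1n (negbTE (lt0n_neq0 (expn_gt0 2 k))).
split => //.
by rewrite ShSS exp2D // !exprMn -!exprM mulnC !exprM hC hD IH1 IH2.
Qed.

End ShFacts.


Section Sum.
Variable R : comPzRingType.
Hypothesis h2 : (2%:R : R) = 0.

Lemma Mpow (C D z : R) i :
  (z ^+ 4 + C * z ^+ 2 + D * z) ^+ (2 ^ i) =
  z ^+ (2 ^ i.+2) + C ^+ (2 ^ i) * z ^+ (2 ^ i.+1) + D ^+ (2 ^ i) * z ^+ (2 ^ i).
Proof.
have p4 : (4 * 2 ^ i = 2 ^ i.+2)%N by rewrite !expnS mulnA.
have p2 : (2 * 2 ^ i = 2 ^ i.+1)%N by rewrite expnS.
by rewrite !exp2D // -(exprM z 4) p4 (exprMn _ C) -(exprM z 2) p2 exprMn.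
Qed.

Lemma sum_partial (a : nat -> R) (C D z : R) (N : nat) :
  (forall j, (j.+3 <= N)%N ->
     a j + a j.+1 * C ^+ (2 ^ j.+1) + a j.+2 * D ^+ (2 ^ j.+2) = 0) ->
  forall j, (j.+2 <= N)%N ->
  \sum_(i < j.+2) a i * (z ^+ 4 + C * z ^+ 2 + D * z) ^+ (2 ^ i) =
  a 0%N * D * z + (a 0%N * C + a 1%N * D ^+ 2) * z ^+ 2
  + (a j + a j.+1 * C ^+ (2 ^ j.+1)) * z ^+ (2 ^ j.+2) + a j.+1 * z ^+ (2 ^ j.+3).
Proof.
move=> mid; elim=> [|j IH] hj.
  rewrite !big_ord_recr big_ord0 /= !Mpow; ring.
rewrite big_ord_recr /= IH; last by apply: ltnW.
rewrite Mpow.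
have e : a j = - (a j.+1 * C ^+ (2 ^ j.+1) + a j.+2 * D ^+ (2 ^ j.+2)).
  by apply/eqP; rewrite -addr_eq0 addrA; apply/eqP/mid.
rewrite e; ring.
Qed.

End Sum.


Section Core.
Variable F : finFieldType.
Hypothesis h2 : (2%:R : F) = 0.

Definition acoef (m : nat) (C D : F) (i : nat) : F :=
  Sh C D (m.-1 - i) ^+ (2 ^ i.+1) + D * (D ^+ (2 ^ i.+1))^-1 * Sseq C D i.

Lemma mid_alg (x2 x1 x0 c d D S1 S2 : F) : d != 0 ->
  x2 + x1 * c + x0 * d ^+ 2 = 0 ->
  (x2 + D * d^-1 * S1) + (x1 + D * (d ^+ 2)^-1 * S2) * c
  + (x0 + D * (d ^+ 4)^-1 * (c * S2 + d * S1)) * d ^+ 2 = 0.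
Proof.
move=> hd hX.
rewrite (_ : _ + _ = (x2 + x1 * c + x0 * d ^+ 2) + 2%:R * (D * d^-1 * S1 + c * D * (d^+2)^-1 * S2)).
  by rewrite hX h2; ring.
by field; rewrite ?expf_neq0.
Qed.

Lemma pow2S (x : F) k : x ^+ (2 ^ k.+1) = (x ^+ (2 ^ k)) ^+ 2.
Proof. by rewrite -exprM expnSr. Qed.

Lemma rev_pow (x2 x1 x0 C D : F) k : x2 = C * x1 ^+ 2 + D ^+ 2 * x0 ^+ 4 ->
  x2 ^+ (2 ^ k) + x1 ^+ (2 ^ k.+1) * C ^+ (2 ^ k) + x0 ^+ (2 ^ k.+2) * (D ^+ (2 ^ k)) ^+ 2 = 0.
Proof.
move=> hr.
have : (x2 + (C * x1 ^+ 2 + D ^+ 2 * x0 ^+ 4)) ^+ (2 ^ k) = 0.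
  by rewrite -hr addcc // expr0n expn_eq0.
rewrite !exp2D // (exprMn _ C) (exprMn _ (D ^+ 2)) -!exprM.
rewrite (_ : (2 * 2 ^ k = 2 ^ k.+1)%N); last by rewrite expnS.
rewrite (_ : (4 * 2 ^ k = 2 ^ k.+2)%N); last by rewrite !expnS mulnA.
rewrite -expnSr => h; rewrite -[in RHS]h; ring.
Qed.

Lemma mid_id m (C D : F) : D != 0 -> forall j, (j.+3 <= m)%N ->
  acoef m C D j + acoef m C D j.+1 * C ^+ (2 ^ j.+1)
  + acoef m C D j.+2 * D ^+ (2 ^ j.+2) = 0.
Proof.
move=> hD j hj.
have [n ->] : exists n, m = (n + j.+3)%N by exists (m - j.+3)%N; rewrite subnK.
rewrite /acoef /Sseq.
have e0 : ((n + j.+3).-1 - j = n.+2)%N by lia.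
have e1 : ((n + j.+3).-1 - j.+1 = n.+1)%N by lia.
have e2 : ((n + j.+3).-1 - j.+2 = n)%N by lia.
rewrite e0 e1 e2 (ShSS _ C D j.+1).
set d := D ^+ (2 ^ j.+1).
have hd : d != 0 by rewrite expf_neq0.
have d2 : D ^+ (2 ^ j.+2) = d ^+ 2 by rewrite pow2S.
have d4 : D ^+ (2 ^ j.+3) = d ^+ 4 by rewrite pow2S pow2S -exprM.
rewrite d2 d4; apply: mid_alg => //.
exact: rev_pow (@Sh_rev _ h2 C D n).
Qed.
End Core.
Arguments acoef {F} m C D i.

Section Core2.
Variable F : finFieldType.
Hypothesis h2 : (2%:R : F) = 0.

Lemma core m (C D z : F) : (2 <= m)%N -> D != 0 -> D ^+ (2 ^ m) = D ->
  z ^+ (2 ^ m) = z ->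
  \sum_(i < m) acoef m C D i * (z ^+ 4 + C * z ^+ 2 + D * z) ^+ (2 ^ i) =
  (Sh C D m.+1 + D * Sh C D m.-1 ^+ 2) * z.
Proof.
case: m => [|[|n]] // _ hD hDq hz.
rewrite (@sum_partial _ h2 _ _ _ _ n.+2) //; last by move=> j hj; apply: mid_id.
have hz2 : z ^+ (2 ^ n.+3) = z ^+ 2 by rewrite pow2S hz.
rewrite hz2 hz /acoef /Sseq.
rewrite subn0 (_ : (n.+2.-1 - 1 = n)%N); last by lia.
rewrite (_ : (n.+2.-1 - n = 1)%N); last by lia.
rewrite (_ : (n.+2.-1 - n.+1 = 0)%N); last by lia.
rewrite (ShSS _ C D n.+1) (ShSS _ C D 0) (@Sh_rev _ h2 C D n).
have z0 : (0 : F) ^+ (2 ^ n.+2) = 0 by rewrite expr0n expn_eq0.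
rewrite (_ : Sh C D 1 = 1) // (_ : Sh C D 0 = 0) // expr1n z0.
rewrite hDq.
have hr : (D ^+ (2 ^ n.+1)) ^+ 2 = D by rewrite -pow2S.
have hr0 : D ^+ (2 ^ n.+1) != 0 by rewrite expf_neq0.
move: (C ^+ (2 ^ n.+1)) (Sh C D n.+1) (Sh C D n) => c1 s1 s0.
move: (D ^+ (2 ^ n.+1)) hr hr0 => r <- hr0.
apply: (@c2 _ h2 _ _ (z + (C * s1 ^+ 2 + C / r ^+ 2 + r ^+ 4 * s0 ^+ 4) * z ^+ 2)).
field. all: by rewrite ?expf_neq0.
Qed.
End Core2.


Section Gen.
Variable R : comPzRingType.
Hypothesis h2 : (2%:R : R) = 0.

Lemma c2f (a b k e : R) : e = 0 -> a - b = e + 2%:R * k -> a = b.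
Proof. by move=> -> h; apply: (@c2 _ h2 _ _ k); rewrite h add0r. Qed.

Lemma pow2Sg (x : R) k : x ^+ (2 ^ k.+1) = (x ^+ (2 ^ k)) ^+ 2.
Proof. by rewrite -exprM expnSr. Qed.

Lemma pow_root (s : nat -> R) (C D t : R) :
  s 0%N = 0 -> s 1%N = 1 ->
  (forall n, s n.+2 = C * s n.+1 ^+ 2 + D ^+ 2 * s n ^+ 4) ->
  t ^+ 4 = C * t ^+ 2 + D * t ->
  forall n, t ^+ (2 ^ n.+1) = s n.+1 * t ^+ 2 + D * s n ^+ 2 * t.
Proof.
move=> s0 s1 rec t4; elim=> [|n IH].
  rewrite s0 s1; ring.
rewrite pow2Sg IH sqrD // rec.
apply: (c2f _ _ 0 (s n.+1 ^+ 2 * (t ^+ 4 - (C * t ^+ 2 + D * t)))).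
  by rewrite t4 subrr mulr0.
ring.
Qed.

End Gen.

Lemma t_one (F : finFieldType) (h2 : (2%:R : F) = 0) (m : nat) :
  (2 <= m)%N -> #|F| = (2 ^ m * 2 ^ m)%N ->
  forall C D : F, C ^+ (2 ^ m) = C -> D ^+ (2 ^ m) = D -> D != 0 ->
  (forall y : F, y ^+ 3 + C * y + D != 0) ->
  Sh C D m.+1 + D * Sh C D m.-1 ^+ 2 = 1.
Proof.
move=> hm hF C D hC hD hD0 NR.
set p : {poly F} := 'X^3 + C *: 'X + D%:P.
have sp : (1 < size p)%N.
  rewrite /p -addrA size_polyDl ?size_polyXn //.
  apply: (leq_ltn_trans (size_polyD _ _)).
  rewrite gtn_max (leq_ltn_trans (size_scale_leq _ _)) ?size_polyX //.
  by rewrite (leq_ltn_trans (size_polyC_leq1 _)).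
have [E [iota [th hroot _]]] := countable_field_extension sp.
have h2E : (2%:R : E) = 0 by rewrite -(rmorph_nat iota) h2 rmorph0.
set q := (2 ^ m)%N.
set C' := iota C; set D' := iota D.
have hC' : C' ^+ q = C' by rewrite /C' -rmorphXn hC.
have hD' : D' ^+ q = D' by rewrite /D' -rmorphXn hD.
have hD0' : D' != 0 by rewrite /D' fmorph_eq0.
have hf : th ^+ 3 + C' * th + D' = 0.
  move: hroot; rewrite /root /p !rmorphD /= map_polyXn map_polyZ map_polyX map_polyC /=.
  by rewrite !hornerE => /eqP.
have notimg : forall a : F, th != iota a.
  move=> a; apply/eqP => e; move: (NR a); rewrite -(fmorph_eq0 iota).
  by rewrite !rmorphD rmorphXn rmorphM -e -/C' -/D' hf eqxx.
have hth0 : th != 0.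
  apply/eqP => e; move: hf; rewrite e expr0n /= mulr0 !add0r => /eqP.
  by rewrite (negbTE hD0').
have hfq : forall y : E, y ^+ 3 + C' * y + D' = 0 -> (y ^+ q) ^+ 3 + C' * y ^+ q + D' = 0.
  move=> y hy.
  have : (y ^+ 3 + C' * y + D') ^+ q = 0 by rewrite hy expr0n expn_eq0.
  by rewrite !exp2D // (exprMn _ C') hC' hD' exprAC.
have img : forall y : E, (y ^+ q) ^+ q = y -> exists a, y = iota a.
  move=> y hy.
  have H : (map_poly iota ('X^#|F| - 'X)).[y] = 0.
    by rewrite rmorphB /= map_polyXn map_polyX !hornerE hF exprM hy subrr.
  move: H; rewrite finField_genPoly rmorph_prod horner_prod => /eqP /prodf_eq0 [a _ ha].
  move: ha => /=; rewrite map_polyXsubC hornerXsubC subr_eq0 => /eqP ->; by exists a.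
have finj : forall x y : E, x ^+ q = y ^+ q -> x = y.
  move=> x y hxy.
  have : (x + y) ^+ q == 0 by rewrite exp2D // hxy addcc.
  rewrite expf_eq0 expn_gt0 /= => /eqP hs.
  by rewrite -(@oppc _ h2E y); apply/eqP; rewrite -addr_eq0 hs.
have th4 : th ^+ 4 = C' * th ^+ 2 + D' * th.
  apply: (@c2f _ h2E _ _ (- (C' * th ^+ 2 + D' * th)) (th * (th ^+ 3 + C' * th + D'))).
    by rewrite hf mulr0.
  ring.
pose s n := iota (Sh C D n).
have srec : forall n, s n.+2 = C' * s n.+1 ^+ 2 + D' ^+ 2 * s n ^+ 4.
  move=> n; rewrite /s (@Sh_rev _ h2 C D n) rmorphD (rmorphM iota C) (rmorphM iota (D ^+ 2)) !rmorphXn //.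
have hpow := @pow_root E h2E s C' D' th (rmorph0 iota) (rmorph1 iota) srec th4.
set al := s m; set be := D' * s m.-1 ^+ 2.
have m0 : (0 < m)%N by apply: ltnW.
have hv : th ^+ q = al * th ^+ 2 + be * th.
  by have := hpow m.-1; rewrite prednK.
have hal : al ^+ q = al by rewrite /al /s -rmorphXn /q (@Sh_frob _ h2 C D m hC hD).
have hbe : be ^+ q = be.
  by rewrite /be (exprMn _ D') hD' exprAC /s /q -(rmorphXn _ (2 ^ m)) (@Sh_frob _ h2 C D m hC hD).
set v := th ^+ q.
have hw : v ^+ q = al * v ^+ 2 + be * v.
  by rewrite {1}/v hv exp2D // (exprMn _ al) (exprMn _ be) hal hbe exprAC.
have hfv := hfq th hf; have hfw := hfq v hfv.
have fact : forall y, y ^+ 3 + C' * y + D' = 0 -> y != th -> y ^+ 2 + y * th + th ^+ 2 + C' = 0.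
  move=> y hy hne; apply/eqP.
  have : (y - th) * (y ^+ 2 + y * th + th ^+ 2 + C') == 0.
    rewrite (_ : (y - th) * _ = (y ^+ 3 + C' * y + D') - (th ^+ 3 + C' * th + D')); last by ring.
    by rewrite hy hf subrr.
  by rewrite mulf_eq0 subr_eq0 (negbTE hne).
have q2 : v ^+ q = th -> False.
  by move=> e; have [a ea] := img th e; move: (notimg a); rewrite -ea eqxx.
have vth : v != th.
  apply/eqP => e; apply: q2; rewrite /v in e *; by rewrite e e.
have wth : v ^+ q != th by apply/eqP => /q2.
have wv : v ^+ q != v.
  by apply/eqP => e; move: vth; rewrite (finj v th e) eqxx.
have Gw := fact _ hfw wth; have Gv := fact _ hfv vth.
have hwsum : v ^+ q = v + th.
  have : (v ^+ q - v) * (v ^+ q + v + th) == 0.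
    rewrite (_ : _ * _ = (v ^+ q ^+ 2 + v ^+ q * th + th ^+ 2 + C') - (v ^+ 2 + v * th + th ^+ 2 + C')); last by ring.
    by rewrite Gw Gv subrr.
  rewrite mulf_eq0 subr_eq0 (negbTE wv) /= => /eqP h.
  rewrite -(@oppc _ h2E (v + th)); apply/eqP; rewrite -addr_eq0 addrA h //.
have E1 : al * (al * th ^+ 2 + be * th) ^+ 2 + be * (al * th ^+ 2 + be * th)
          - ((al * th ^+ 2 + be * th) + th) = 0.
  move: hw; rewrite hwsum /v hv => <-; by rewrite subrr.
have E4 : th ^+ 4 - (C' * th ^+ 2 + D' * th) = 0 by rewrite th4 subrr.
set la := al + al ^+ 3 * C' + al * be ^+ 2 + al * be.
set mu := 1 + be + al ^+ 3 * D' + be ^+ 2.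
have hlm : la * th ^+ 2 + mu * th = 0.
  apply: (@c2f _ h2E _ _ (al * th ^+ 2 + th + be * th - al ^+ 2 * be * th ^+ 3)
    ((al * (al * th ^+ 2 + be * th) ^+ 2 + be * (al * th ^+ 2 + be * th)
          - ((al * th ^+ 2 + be * th) + th)) - al ^+ 3 * (th ^+ 4 - (C' * th ^+ 2 + D' * th)))).
    by rewrite E1 E4 mulr0 subrr.
  rewrite /la /mu; ring.
have hlm' : la * th + mu = 0.
  apply/eqP; move: hlm => /eqP.
  rewrite (_ : la * th ^+ 2 + mu * th = (la * th + mu) * th); last by ring.
  by rewrite mulf_eq0 (negbTE hth0) orbF.
set aF := Sh C D m; set bF := D * Sh C D m.-1 ^+ 2.
set laF := aF + aF ^+ 3 * C + aF * bF ^+ 2 + aF * bF.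
set muF := 1 + bF + aF ^+ 3 * D + bF ^+ 2.
have ela : iota laF = la.
  rewrite /laF /la /al /be /s /aF /bF /C' /D'; move: (Sh C D m) (Sh C D m.-1) => x y; rewrite !rmorphD !rmorphM ?rmorphXn; ring.
have emu : iota muF = mu.
  rewrite /muF /mu /al /be /s /aF /bF /C' /D'; move: (Sh C D m) (Sh C D m.-1) => x y; rewrite !rmorphD !rmorphM ?rmorphXn rmorph1; ring.
have laF0 : laF = 0.
  apply/eqP; apply/negPn/negP => hla.
  have hla' : la != 0 by rewrite -ela fmorph_eq0.
  move: (notimg (- muF / laF)); rewrite fmorph_div rmorphN ela emu.
  have e : la * th = - mu by apply/eqP; rewrite -addr_eq0 hlm'.
  by rewrite -[th](mulKf hla') e mulrC eqxx.
have muF0 : muF = 0.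
  move: hlm'; rewrite -ela laF0 rmorph0 mul0r add0r -emu => /eqP.
  by rewrite fmorph_eq0 => /eqP.
have eS := @Sh_rev _ h2 C D m.-1; rewrite prednK // in eS.
rewrite eS -/aF.
have h2F := h2.
case: (eqVneq aF 0) => ha.
  apply: (@c2f _ h2 _ _ (-1) muF); first exact: muF0.
  by rewrite /muF /bF ha; ring.
have g0 : 1 + aF ^+ 2 * C + bF ^+ 2 + bF = 0.
  apply/eqP; move: laF0 => /eqP.
  rewrite (_ : laF = aF * (1 + aF ^+ 2 * C + bF ^+ 2 + bF)); last by rewrite /laF; ring.
  by rewrite mulf_eq0 (negbTE ha).
apply: (@c2f _ h2 _ _ (-1) (1 + aF ^+ 2 * C + bF ^+ 2 + bF)); first exact: g0.
by rewrite /bF; ring.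
Qed.


Theorem theorem3p11 (F : finFieldType) (m : nat) :
  (2 <= m)%N ->
  #|F| = (2 ^ m * 2 ^ m)%N ->
  forall b delta : F,
    b ^+ (2 ^ m) = b -> b != 0 ->
    delta ^+ (2 ^ m) != delta ->
    bijective (Ppoly (2 ^ m) b delta) ->
    (forall c : F, Ppoly (2 ^ m) b delta (Pinv m b delta c) = c) /\
    (forall c : F, Pinv m b delta (Ppoly (2 ^ m) b delta c) = c).
Proof.
move=> hm hF b de hb hb0 hde hP.
have h2 : (2%:R : F) = 0.
  apply: pcharf0; apply: (@card_finPcharP _ 2 (m + m)) => //.
  by rewrite hF expnD.
set q := (2 ^ m)%N.
have hq2 : forall x : F, (x ^+ q) ^+ q = x by move=> x; rewrite -exprM -hF expf_card.
set T := de + de ^+ q.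
have hT : T ^+ q = T by rewrite /T exp2D // hq2 addrC.
have hT0 : T != 0.
  apply/eqP => e; move: hde; rewrite -/q.
  suff -> : de ^+ q = de by rewrite eqxx.
  by rewrite -[RHS](@oppc _ h2); apply/eqP; rewrite -addr_eq0 addrC -/T e.
set C := Cc q b de; set D := Dc q b de; set B := Bc q b de.
have eC : C = b ^+ 4 * T by [].
have eD : D = b ^+ 4 * T ^+ 2 by [].
have eB : B = b ^+ 4 * (de * de ^+ q) * T by rewrite /B /Bc (exprS de q).
have hC : C ^+ q = C by rewrite eC exprMn exprAC hb hT.
have hD : D ^+ q = D by rewrite eD exprMn exprAC hb exprAC hT.
have hD0 : D != 0 by rewrite eD mulf_neq0 // expf_neq0.
pose M (z : F) := z ^+ 4 + C * z ^+ 2 + D * z.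
rewrite -/q in hb hde.
have z0q : (0 : F) ^+ q = 0 by rewrite expr0n /q expn_eq0.
have he : (expo q * 4 = q * (2 * q + 1))%N.
  rewrite /expo divnK //; apply: dvdn_mulr.
  by rewrite /q (_ : 4 = 2 ^ 2)%N // dvdn_exp2l.
have W4 : forall x, (Ppoly q b de x ^+ q + Ppoly q b de x) ^+ 4 = M (x ^+ q + x) + B.
  move=> x; set z := x ^+ q + x; set u := z + de.
  have eu : x ^+ q + x + de = u by [].
  set U := u ^+ expo q.
  have hu4 : U ^+ (2 ^ 2) = u ^+ 2 * u ^+ q.
    rewrite /U -exprM he (_ : (q * (2 * q + 1) = (q * q) * 2 + q)%N); last by nia.
    by rewrite exprD exprM exprM hq2.
  have huq : u ^+ q = z + de ^+ q.
    by rewrite /u /z !exp2D // hq2 (addrC x).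
  have ew : Ppoly q b de x ^+ q + Ppoly q b de x = b * U ^+ q + b * U + z.
    rewrite /Ppoly eu -/U exp2D // (exprMn _ b) hb /z; ring.
  rewrite ew (_ : 4%N = 2 ^ 2)%N // (@exp2D _ h2 2 (b * U ^+ q + b * U) z) (@exp2D _ h2 2 (b * U ^+ q) (b * U)).
  rewrite (exprMn _ b) (exprMn _ b) exprAC hu4.
  rewrite exprMn exprAC hq2 huq.
  apply: (@c2f _ h2 _ _ (b ^+ 4 * (z + de) * (z + de ^+ q) * z) 0) => //.
  rewrite /M /u eB eC eD /T -/z; ring.
have inj4 : forall a c : F, a ^+ 4 = c ^+ 4 -> a = c.
  move=> a c hac.
  have : (a + c) ^+ (2 ^ 2) == 0 by rewrite exp2D // hac addcc.
  rewrite expf_eq0 /= => /eqP hs.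
  by rewrite -(@oppc _ h2 c); apply/eqP; rewrite -addr_eq0 hs.
pose tr (y : F) := y ^+ q + y.
have hdep : forall x x', tr x = tr x' -> tr (Ppoly q b de x) = tr (Ppoly q b de x').
  by move=> x x' e; apply: inj4; rewrite /tr !W4 -/(tr x) -/(tr x') e.
pose xz (z : F) := z * de / T.
have htr : forall z, z ^+ q = z -> tr (xz z) = z.
  move=> z hz; rewrite /tr /xz !exprMn exprVn hz hT.
  apply/eqP; rewrite -subr_eq0; apply/eqP; rewrite /T; field.
  by rewrite -/T.
have trA : forall y, tr y ^+ q = tr y by move=> y; rewrite /tr exp2D // hq2 addrC.
have M0 : M 0 = 0 by rewrite /M; ring.
have noFq : forall z, z ^+ q = z -> M z = 0 -> z = 0.
  move=> z hz hMz; apply/eqP/negPn/negP => hz0.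
  pose A := [set y : F | y ^+ q == y].
  pose g y := tr (Ppoly q b de (xz y)).
  have gzg0 : g z = g 0.
    apply: inj4; rewrite /g W4 W4 -/(tr (xz z)) -/(tr (xz 0)) htr // htr ?z0q //.
    by rewrite hMz M0.
  have zA : z \in A by rewrite inE hz.
  have A0 : (0 : F) \in A by rewrite inE z0q.
  have lt : (#|g @: A| < #|A|)%N.
    rewrite ltn_neqAle leq_imset_card andbT.
    apply/imset_injP => inj; move: hz0; by rewrite (inj z 0 zA A0 gzg0) eqxx.
  have : ~~ (A \subset g @: A).
    by apply/negP => /subset_leq_card; rewrite leqNgt lt.
  case/subsetPn => s sA sN.
  case: hP => Pi _ hPr.
  set x := Pi (xz s).
  have hs : s ^+ q = s by move: sA; rewrite inE => /eqP.
  move: sN; apply/negP/negPn; apply/imsetP; exists (tr x); first by rewrite inE trA.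
  rewrite /g -(htr s hs) -{1}(hPr (xz s)) -/x; apply: hdep.
  by rewrite htr // trA.
have NR : forall y : F, y ^+ 3 + C * y + D != 0.
  move=> y; apply/eqP => hy.
  have My : M y = 0 by rewrite /M; transitivity (y * (y ^+ 3 + C * y + D)); [ring | rewrite hy mulr0].
  have Myq : M (y ^+ q) = 0.
    have : (M y) ^+ q = 0 by rewrite My expr0n expn_eq0.
    rewrite /M !exp2D // (exprMn _ C) (exprMn _ D) hC hD.
    by rewrite (exprAC y 4) (exprAC y 2).
  have Madd : forall a c, M (a + c) = M a + M c.
    move=> a c; rewrite /M (_ : 4%N = 2 ^ 2)%N // exp2D // sqrD //; ring.
  have hyq : (y + y ^+ q) ^+ q = y + y ^+ q by rewrite exp2D // hq2 addrC.
  have e0 := noFq _ hyq; rewrite Madd My Myq addr0 in e0.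
  have e1 : y ^+ q = y.
    by rewrite -[RHS](@oppc _ h2 y); apply/eqP; rewrite -addr_eq0 addrC e0.
  have y0 := noFq _ e1 My.
  by move: hy hD0; rewrite y0 expr0n /= mulr0 !add0r => ->; rewrite eqxx.
have t1 := @t_one F h2 m hm hF C D hC hD hD0 NR.
have key : forall x, Pinv m b de (Ppoly q b de x) = x.
  move=> x; rewrite /Pinv /= -/q -/C -/D -/B.
  set c := Ppoly q b de x.
  have hz : (x ^+ q + x) ^+ q = x ^+ q + x by rewrite exp2D // hq2 addrC.
  have eM : c ^+ (4 * q) + c ^+ 4 + B = M (x ^+ q + x).
    rewrite mulnC exprM (_ : 4%N = 2 ^ 2)%N // -exp2D //; change (2 ^ 2)%N with 4%N.
    have := W4 x; rewrite -/c => ->; by rewrite -addrA addcc // addr0.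
  rewrite eM /M.
  have := @core F h2 m C D (x ^+ q + x) hm hD0 hD hz.
  rewrite /acoef t1 mul1r => ->.
  by rewrite /c /Ppoly (addrC de) addrAC addcc // add0r.
split; last exact: key.
move=> c; case: hP => Pi _ hPr.
by rewrite -{1}(hPr c) key hPr.
Qed.
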